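(* For each prime $p$, there are at most two extreme symmetric triples whose smallest element is $p$, and at most one extreme symmetric sequence of length $4$ whose smallest element is $p$. There is no extreme symmetric sequence of length greater than $4$.
   Context: Two distinct primes $p$ and $q$ form a symmetric pair if $\gcd(p-1, q-1) = |p-q|$. A symmetric sequence is a finite set of primes in which any two distinct primes form a symmetric pair; its length is the number of primes in it, and a symmetric triple is a symmetric sequence of length $3$. A symmetric sequence is called extreme if, writing $p$ for its smallest prime, its largest prime is $2p-1$. *)

(* Defs.v *)
From mathcomp Require Import all_boot.
Set Implicit Arguments. Unset Strict Implicit. Unset Printing Implicit Defensive.

(* Finite sets of primes are represented canonically as strictly increasing
   lists of naturals (sorted ltn s), so that equality of lists is equality
   of sets. *)

Definition distn (p q : nat) : nat := (p - q) + (q - p).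

Definition symmetric_pair (p q : nat) : bool :=
  [&& prime p, prime q, p != q & gcdn p.-1 q.-1 == distn p q].

Definition symmetric_seq (s : seq nat) : Prop :=
  sorted ltn s /\ all prime s /\
  (forall p q, p \in s -> q \in s -> p != q -> symmetric_pair p q).

Definition min_elem (s : seq nat) (p : nat) : Prop :=
  p \in s /\ forall q, q \in s -> p <= q.

Definition extreme (s : seq nat) : Prop :=
  exists p, min_elem s p /\ (2 * p - 1) \in s /\ forall q, q \in s -> q <= 2 * p - 1.

(* Main.v *)
Require Import Defs.
From mathcomp Require Import all_boot zify.
Set Implicit Arguments. Unset Strict Implicit. Unset Printing Implicit Defensive.

Lemma mid (p q : nat) : 1 < p -> p < q -> q < 2*p-1 ->
  gcdn p.-1 q.-1 = distn p q -> gcdn q.-1 (2*p-1).-1 = distn q (2*p-1) ->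
  2*q = 3*p-1 \/ 3*q = 4*p-1.
Proof.
move=> p1 pq q2 g1 g2.
have d1 : (q - p) %| p.-1.
  have := dvdn_gcdl p.-1 q.-1; rewrite g1 /distn.
  by have -> : p - q + (q - p) = q - p by lia.
have d2 : (2*p-1-q) %| q.-1.
  have := dvdn_gcdl q.-1 (2*p-1).-1; rewrite g2 /distn.
  by have -> : q - (2*p-1) + (2*p-1 - q) = 2*p-1-q by lia.
case/dvdnP: d1 => k hk; case/dvdnP: d2 => j hj.
set a := q - p in hk hj.
have a0 : 0 < a by lia.
have hb : 2*p-1-q = (k-1)*a by rewrite mulnBl mul1n; lia.
rewrite hb in hj.
have e : (k+1)*a = (j*(k-1))*a by rewrite -mulnA -hj mulnDl mul1n; lia.
have e2 : k+1 = j*(k-1) by apply/eqP; rewrite -(eqn_pmul2r a0); apply/eqP.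
have k1 : 1 < k by nia.
have : k = 2 \/ k = 3.
  case: (leqP k 3) => hk3; first lia.
  case: j e2 {hj e} => [|[|j]] e2; nia.
case=> hk'; rewrite hk' in hk; lia.
Qed.

Definition T p := [:: p; (3*p-1)./2; (4*p-1)%/3; 2*p-1].

Lemma inT s p : symmetric_seq s -> extreme s -> min_elem s p ->
  (2*p-1) \in s /\ 1 < p /\ {subset s <= T p}.
Proof.
move=> [srt [pr sym]] [p' [[p's p'm] [tp ub]]] [ps pm].
have ep : p' = p by apply/eqP; rewrite eqn_leq p'm // pm.
subst p'.
have p1 : 1 < p by apply: prime_gt1; exact: (allP pr).
split=> //; split=> // q qs.
have := pm q qs; have := ub q qs => h1 h2.
case: (eqVneq q p) => [->|qp]; first by rewrite !inE eqxx.
case: (eqVneq q (2*p-1)) => [->|qt]; first by rewrite !inE eqxx !orbT.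
have /and4P [_ _ _ /eqP g1] := sym p q ps qs ltac:(by rewrite eq_sym).
have /and4P [_ _ _ /eqP g2] := sym q (2*p-1) qs tp qt.
have [e|e] := @mid p q p1 (ltac:(rewrite ltn_neqAle eq_sym qp h2 //)) (ltac:(rewrite ltn_neqAle qt h1 //)) g1 g2.
  by rewrite !inE -e mul2n doubleK eqxx !orbT.
by rewrite !inE -e mulKn // eqxx !orbT.
Qed.

Lemma tri s p : symmetric_seq s -> extreme s -> min_elem s p -> size s = 3 ->
  s =i [:: p; (3*p-1)./2; 2*p-1] \/ s =i [:: p; (4*p-1)%/3; 2*p-1].
Proof.
move=> ss es ms sz.
have [tp [p1 sT]] := inT ss es ms.
have us : uniq s by have [srt _] := ss; exact: (@sorted_uniq _ ltn ltn_trans ltnn) srt.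
have [x xs /andP [xp xt]] : exists2 x, x \in s & (x != p) && (x != 2*p-1).
  apply/hasP; apply/negPn/negP => /hasPn h.
  have : size s <= size [:: p; 2*p-1].
    apply: uniq_leq_size => // y ys; have := h y ys.
    by rewrite !inE negb_and !negbK => /orP [->|->] //; rewrite orbT.
  by rewrite sz.
have pt : p != 2*p-1 by apply/eqP; lia.
have ps : p \in s by case: ms.
have hs : s =i [:: p; x; 2*p-1].
  have [_ h] := @uniq_min_size _ [:: p; x; 2*p-1] s
    ltac:(by rewrite /= !inE !negb_or pt (eq_sym p x) xp xt)
    ltac:(by move=> y; rewrite !inE => /or3P [] /eqP ->; rewrite ?xs)
    ltac:(by rewrite sz).
  by move=> y; rewrite h.
have := sT x xs; rewrite !inE (negbTE xp) (negbTE xt) /= orbF => /orP [] /eqP e;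
  [left|right]; by rewrite -e.
Qed.

Theorem corollary2 :
  (forall p : nat, prime p ->
     forall s1 s2 s3 : seq nat,
       (forall s, s \in [:: s1; s2; s3] ->
          [/\ symmetric_seq s, extreme s, size s = 3 & min_elem s p]) ->
       s1 = s2 \/ s1 = s3 \/ s2 = s3) /\
  (forall p : nat, prime p ->
     forall s1 s2 : seq nat,
       symmetric_seq s1 -> extreme s1 -> size s1 = 4 -> min_elem s1 p ->
       symmetric_seq s2 -> extreme s2 -> size s2 = 4 -> min_elem s2 p ->
       s1 = s2) /\
  (forall s : seq nat, symmetric_seq s -> extreme s -> size s <= 4).
Proof.
have srtd : forall s, symmetric_seq s -> sorted ltn s by move=> s [].
have eqs : forall s1 s2, symmetric_seq s1 -> symmetric_seq s2 -> s1 =i s2 -> s1 = s2.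
  move=> s1 s2 h1 h2 e; apply: (@irr_sorted_eq _ ltn ltn_trans ltnn) => //; by [apply: srtd].
have uq : forall s, symmetric_seq s -> uniq s.
  by move=> s h; exact: (@sorted_uniq _ ltn ltn_trans ltnn) (srtd s h).
split; last split.
- move=> p _ s1 s2 s3 h.
  have [a1 b1 c1 d1] := h s1 ltac:(by rewrite !inE eqxx).
  have [a2 b2 c2 d2] := h s2 ltac:(by rewrite !inE eqxx !orbT).
  have [a3 b3 c3 d3] := h s3 ltac:(by rewrite !inE eqxx !orbT).
  case: (tri a1 b1 d1 c1) => e1; case: (tri a2 b2 d2 c2) => e2;
  case: (tri a3 b3 d3 c3) => e3;
  first [ left; apply: eqs => // y; by rewrite e1 e2
        | right; left; apply: eqs => // y; by rewrite e1 e3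
        | right; right; apply: eqs => // y; by rewrite e2 e3 ].
- move=> p _ s1 s2 a1 b1 c1 d1 a2 b2 c2 d2.
  have [_ [_ t1]] := inT a1 b1 d1.
  have [_ [_ t2]] := inT a2 b2 d2.
  have [_ h1] := uniq_min_size (uq _ a1) t1 ltac:(by rewrite c1).
  have [_ h2] := uniq_min_size (uq _ a2) t2 ltac:(by rewrite c2).
  by apply: eqs => // y; rewrite h1 h2.
- move=> s a b.
  have [q [mq _]] := b.
  have [_ [_ t]] := inT a b mq.
  exact: (uniq_leq_size (uq _ a) t).
Qed.
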